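(* Let $A\in\mathbb{R}^{d\times n}$ (with $n>d$) have nonzero columns $a_1,\dots,a_n$, and let $\tilde A=[A,-A]$ with columns $\tilde a_1,\dots,\tilde a_{2n}$ (so $\tilde a_j=a_j$ and $\tilde a_{n+j}=-a_j$). Let $x_0\in\mathbb{R}^n$ with support $S=\{i:(x_0)_i\neq 0\}$. Let $x_{\mathrm{opt}}\in\mathbb{R}^{|S|}$ be the vector of nonzero entries of $x_0$ and $A_{\mathrm{opt}}$ the matrix of the corresponding columns $a_i$, $i\in S$. Define $\tilde x_0\in\mathbb{R}^{2n}$ by $(\tilde x_0)_i=\max((x_0)_i,0)$ and $(\tilde x_0)_{n+i}=\max(-(x_0)_i,0)$ for $1\le i\le n$, let $\tilde S=\{j:(\tilde x_0)_j>0\}$, and let $\tilde A_{\mathrm{opt}}$ be the matrix of the columns $\tilde a_j$, $j\in\tilde S$. Then for a vector $c\in\mathbb{R}^d$ the following are equivalent: (i) $A_{\mathrm{opt}}$ has full column rank, $A_{\mathrm{opt}}^Tc=\operatorname{sign}(x_{\mathrm{opt}})$, and $|a_j^Tc|<1$ for all $j\notin S$; (ii) $\tilde A_{\mathrm{opt}}$ has full column rank, $\tilde a_j^Tc=1$ for all $j\in\tilde S$, and $\tilde a_j^Tc<1$ for all $j\in\{1,\dots,2n\}\setminus\tilde S$.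
   Context: $\operatorname{sign}$ is applied componentwise. *)

(* Defs.v *)
From HB Require Import structures.
From mathcomp Require Import all_boot all_order all_algebra.
From mathcomp Require Import reals.
Set Implicit Arguments. Unset Strict Implicit. Unset Printing Implicit Defensive.
Import Order.TTheory GRing.Theory Num.Theory.
Local Open Scope ring_scope.

Definition subcols (R : realType) (m n : nat) (A : 'M[R]_(m, n)) (S : {set 'I_n})
  : 'M[R]_(m, #|S|) :=
  colsub (fun k : 'I_#|S| => @enum_val _ (mem S) k) A.

Definition subvec (R : realType) (n : nat) (x : 'cV[R]_n) (S : {set 'I_n})
  : 'cV[R]_#|S| :=
  rowsub (fun k : 'I_#|S| => @enum_val _ (mem S) k) x.

Definition supp (R : realType) (n : nat) (x : 'cV[R]_n) : {set 'I_n} :=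
  [set i | x i 0 != 0].

Definition coldot (R : realType) (m n : nat) (A : 'M[R]_(m, n)) (j : 'I_n)
  (c : 'cV[R]_m) : R :=
  ((col j A)^T *m c) 0 0.

Definition Atil (R : realType) (m n : nat) (A : 'M[R]_(m, n)) : 'M[R]_(m, n + n) :=
  row_mx A (- A).

Definition xtil (R : realType) (n : nat) (x : 'cV[R]_n) : 'cV[R]_(n + n) :=
  col_mx (\col_i Num.max (x i 0) 0) (\col_i Num.max (- x i 0) 0).

Definition Stil (R : realType) (n : nat) (x : 'cV[R]_n) : {set 'I_(n + n)} :=
  [set j | 0 < xtil x j 0].

(* Main.v *)
Require Import Defs.
From HB Require Import structures.
From mathcomp Require Import all_boot all_order all_algebra.
From mathcomp Require Import reals.
From mathcomp Require Import lra.
Import Order.TTheory GRing.Theory Num.Theory.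
Local Open Scope ring_scope.

Lemma rank_le_cols (F : fieldType) d p q (M1 : 'M[F]_(d,p)) (M2 : 'M[F]_(d,q)) :
  (forall l, exists k a, forall r, M2 r l = a * M1 r k) -> (\rank M2 <= \rank M1)%N.
Proof.
move=> H; rewrite -mxrank_tr -[X in (_ <= X)%N]mxrank_tr; apply: mxrankS.
apply/row_subP => l; have [k [a Hk]] := H l.
have -> : row l M2^T = a *: row k M1^T by apply/rowP => z; rewrite !mxE Hk.
by apply: scalemx_sub; apply: row_sub.
Qed.

Lemma coldotE (R : realType) (m n : nat) (A : 'M[R]_(m, n)) j c :
  coldot A j c = \sum_r A r j * c r 0.
Proof. by rewrite /coldot !mxE; apply: eq_bigr => r _; rewrite !mxE. Qed.

Lemma coldotL (R : realType) (m n : nat) (A : 'M[R]_(m, n)) i c :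
  coldot (Atil A) (lshift n i) c = coldot A i c.
Proof. by rewrite !coldotE; apply: eq_bigr => r _; rewrite /Atil row_mxEl. Qed.

Lemma coldotR (R : realType) (m n : nat) (A : 'M[R]_(m, n)) i c :
  coldot (Atil A) (rshift n i) c = - coldot A i c.
Proof.
by rewrite !coldotE -sumrN; apply: eq_bigr => r _; rewrite /Atil row_mxEr mxE mulNr.
Qed.

Lemma StilL (R : realType) n (x : 'cV[R]_n) i :
  (lshift n i \in Stil x) = (0 < x i 0).
Proof. by rewrite inE /xtil col_mxEu mxE lt_max ltxx orbF. Qed.

Lemma StilR (R : realType) n (x : 'cV[R]_n) i :
  (rshift n i \in Stil x) = (x i 0 < 0).
Proof. by rewrite inE /xtil col_mxEd mxE lt_max ltxx orbF oppr_gt0. Qed.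

Lemma cardE' m (B : {set 'I_m}) : #|B| = (\sum_(j < m) (j \in B : nat))%N.
Proof. by rewrite -sum1_card big_mkcond /=; apply: eq_bigr => j _; case: (j \in B). Qed.

Lemma card_Stil (R : realType) n (x : 'cV[R]_n) : #|Stil x| = #|supp x|.
Proof.
rewrite !cardE' big_split_ord /= -big_split /=; apply: eq_bigr => i _.
rewrite StilL StilR inE; case: (ltrgtP (x i 0) 0) => //= ->; by rewrite eqxx.
Qed.

Lemma subcolsE (R : realType) (m n : nat) (A : 'M[R]_(m, n)) S r k :
  subcols A S r k = A r (enum_val k).
Proof. by rewrite /subcols mxE. Qed.

Lemma splitLR m n (j : 'I_(m + n)) :
  (exists i, j = lshift n i) \/ (exists i, j = rshift m i).
Proof. by rewrite -(splitK j); case: (split j) => i /=; [left|right]; exists i. Qed.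

Theorem lemma2 (R : realType) (d n : nat) (A : 'M[R]_(d, n)) (x0 : 'cV[R]_n)
  (c : 'cV[R]_d) :
  (d < n)%N ->
  (forall j : 'I_n, col j A != 0) ->
  ( [/\ \rank (subcols A (supp x0)) = #|supp x0|,
        (subcols A (supp x0))^T *m c = map_mx Num.sg (subvec x0 (supp x0))
      & forall j : 'I_n, j \notin supp x0 -> `|coldot A j c| < 1] )
  <->
  ( [/\ \rank (subcols (Atil A) (Stil x0)) = #|Stil x0|,
        (forall j : 'I_(n + n), j \in Stil x0 -> coldot (Atil A) j c = 1)
      & forall j : 'I_(n + n), j \notin Stil x0 -> coldot (Atil A) j c < 1] ).
Proof.
move=> _ _.
have suppE i : (i \in supp x0) = (x0 i 0 != 0) by rewrite inE.
have rankST : \rank (subcols (Atil A) (Stil x0)) = \rank (subcols A (supp x0)).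
  apply/eqP; rewrite eqn_leq; apply/andP; split; apply: rank_le_cols => l.
  - have := enum_valP l.
    have [[i Ei]|[i Ei]] := @splitLR n n (enum_val l); rewrite Ei.
    + rewrite StilL => Hi.
      have Hs : i \in supp x0 by rewrite suppE gt_eqF.
      exists (enum_rank_in Hs i), 1 => r.
      by rewrite !subcolsE enum_rankK_in // Ei /Atil row_mxEl mul1r.
    + rewrite StilR => Hi.
      have Hs : i \in supp x0 by rewrite suppE lt_eqF.
      exists (enum_rank_in Hs i), (-1) => r.
      by rewrite !subcolsE enum_rankK_in // Ei /Atil row_mxEr mxE mulN1r.
  - have := enum_valP l; rewrite suppE => Hi.
    case: (ltrgtP (x0 (enum_val l) 0) 0) => Hx; last by rewrite Hx eqxx in Hi.
    + have Hs : rshift n (enum_val l) \in Stil x0 by rewrite StilR.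
      exists (enum_rank_in Hs (rshift n (enum_val l))), (-1) => r.
      by rewrite !subcolsE enum_rankK_in // /Atil row_mxEr mxE mulN1r opprK.
    + have Hs : lshift n (enum_val l) \in Stil x0 by rewrite StilL.
      exists (enum_rank_in Hs (lshift n (enum_val l))), 1 => r.
      by rewrite !subcolsE enum_rankK_in // /Atil row_mxEl mul1r.
have eqsg : (subcols A (supp x0))^T *m c = map_mx Num.sg (subvec x0 (supp x0))
    <-> forall i, i \in supp x0 -> coldot A i c = Num.sg (x0 i 0).
  split.
  - move=> H i Hi; have /matrixP/(_ (enum_rank_in Hi i) 0) := H.
    rewrite !mxE enum_rankK_in // coldotE => <-.
    by apply: eq_bigr => r _; rewrite !mxE enum_rankK_in.
  - move=> H; apply/matrixP => k z; rewrite ord1 !mxE.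
    rewrite -H ?enum_valP // coldotE.
    by apply: eq_bigr => r _; rewrite !mxE.
split.
- case=> Hr /eqsg Hs Hn; split.
  + by rewrite rankST Hr card_Stil.
  + move=> j; have [[i ->]|[i ->]] := @splitLR n n j.
    * rewrite StilL coldotL => Hi; rewrite Hs ?gtr0_sg // suppE gt_eqF //.
    * rewrite StilR coldotR => Hi; rewrite Hs ?ltr0_sg ?opprK // suppE lt_eqF //.
  + move=> j; have [[i ->]|[i ->]] := @splitLR n n j.
    * rewrite StilL coldotL => Hi.
      case: (ltrgtP (x0 i 0) 0) => Hx; last 1 first.
      - have : i \notin supp x0 by rewrite suppE Hx eqxx.
        move/Hn; rewrite ltr_norml => /andP[]; lra.
      - by rewrite Hs ?ltr0_sg ?suppE ?lt_eqF //; lra.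
      - by rewrite Hx in Hi.
    * rewrite StilR coldotR => Hi.
      case: (ltrgtP (x0 i 0) 0) => Hx; last 1 first.
      - have : i \notin supp x0 by rewrite suppE Hx eqxx.
        move/Hn; rewrite ltr_norml => /andP[]; lra.
      - by rewrite Hx in Hi.
      - by rewrite Hs ?gtr0_sg ?suppE ?gt_eqF //; lra.
- case=> Hr Hs Hn; split.
  + by rewrite -rankST Hr card_Stil.
  + apply/eqsg => i; rewrite suppE => Hi.
    case: (ltrgtP (x0 i 0) 0) => Hx; last by rewrite Hx eqxx in Hi.
    * have := Hs (rshift n i); rewrite StilR coldotR ltr0_sg // => H.
      by rewrite -(H Hx) opprK.
    * by have := Hs (lshift n i); rewrite StilL coldotL gtr0_sg // => ->.
  + move=> i; rewrite suppE negbK => /eqP Hx.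
    have := Hn (lshift n i); rewrite StilL coldotL Hx ltxx => /(_ isT) H1.
    have := Hn (rshift n i); rewrite StilR coldotR Hx ltxx => /(_ isT) H2.
    rewrite ltr_norml; apply/andP; split; lra.
Qed.
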